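(* Let $\mathcal{L}$ be the category of algebraic lattices (with morphisms as defined below), let $\mathfrak{M}$ be the class of normal monomorphisms and $\mathfrak{E}$ the class of normal epimorphisms in $\mathcal{L}$. Then $(\mathcal{L},\mathfrak{M},\mathfrak{E})$ is a proto-exact category.
   Context: In a complete lattice $L$, an element $x$ is compact if whenever $x\le\bigvee_{i\in I}y_i$ there is a finite $F\subseteq I$ with $x\le\bigvee_{i\in F}y_i$. An algebraic lattice is a complete lattice in which every element is a join of compact elements. A morphism of algebraic lattices $f:L_1\to L_2$ is a function preserving arbitrary joins (including the empty join) and sending compact elements to compact elements (meets need not be preserved). The one-element lattice is a zero object. A morphism $f:L_1\to L_2$ is a normal monomorphism if $f$ is injective and $f(L_1)$ is downward closed in $L_2$. It is a normal epimorphism if there is $x_0\in L_1$ and an isomorphism $\varphi:\{y\in L_1: y\ge x_0\}\to L_2$ with $f(y)=\varphi(y\vee x_0)$ for all $y\in L_1$. A proto-exact category is a pointed category $\mathcal{C}$ with two classes of morphisms $\mathfrak{M}$ (admissible monomorphisms) and $\mathfrak{E}$ (admissible epimorphisms) such that: (1) for every object $A$, $0\to A$ lies in $\mathfrak{M}$ and $A\to 0$ lies in $\mathfrak{E}$; (2) $\mathfrak{M}$ and $\mathfrak{E}$ contain all isomorphisms and are closed under composition; (3) a commutative square with top $i:A\to B$, bottom $i':A'\to B'$ in $\mathfrak{M}$ and left $j:A\to A'$, right $j':B\to B'$ in $\mathfrak{E}$ is a pullback if and only if it is a pushout; (4) every pair $i':A'\to B'$ in $\mathfrak{M}$, $j':B\to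 B'$ in $\mathfrak{E}$ can be completed to such a square which is both a pullback and a pushout, with $i\in\mathfrak{M}$, $j\in\mathfrak{E}$; (5) every pair $i:A\to B$ in $\mathfrak{M}$, $j:A\to A'$ in $\mathfrak{E}$ can be completed to such a square which is both a pullback and a pushout, with $i'\in\mathfrak{M}$, $j'\in\mathfrak{E}$. *)

(* Defs.v *)
From Stdlib Require Import List.
Set Implicit Arguments.

Record CLat := {
  car :> Type;
  le : car -> car -> Prop;
  le_refl : forall x, le x x;
  le_trans : forall x y z, le x y -> le y z -> le x z;
  le_antisym : forall x y, le x y -> le y x -> x = y;
  sup : (car -> Prop) -> car;
  sup_ub : forall (S : car -> Prop) x, S x -> le x (sup S);
  sup_least : forall (S : car -> Prop) y, (forall x, S x -> le x y) -> le (sup S) y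
}.
Arguments le {c} _ _.
Arguments sup {c} _.

Definition join2 {L : CLat} (x y : L) : L := sup (fun z => z = x \/ z = y).

Definition compact {L : CLat} (x : L) : Prop :=
  forall S : L -> Prop, le x (sup S) ->
    exists F : list L, (forall y, In y F -> S y) /\ le x (sup (fun y => In y F)).

Definition algebraic (L : CLat) : Prop :=
  forall x : L, x = sup (fun c => compact c /\ le c x).

Record AlgLat := { alat :> CLat; alat_alg : algebraic alat }.

Definition img {A B : Type} (f : A -> B) (S : A -> Prop) : B -> Prop :=
  fun y => exists x, S x /\ y = f x.

Record hom (A B : AlgLat) := {
  fn :> A -> B;
  hom_sup : forall S : A -> Prop, fn (sup S) = sup (img fn S);
  hom_compact : forall c : A, compact c -> compact (fn c)
}.

Definition comp_eq {A B C D : AlgLat} (f : hom A B) (g : hom B D) (h : hom A C) (k : hom C D) :=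
  forall a, g (f a) = k (h a).

Definition is_iso {A B : AlgLat} (f : hom A B) : Prop :=
  exists g : hom B A, (forall a, g (f a) = a) /\ (forall b, f (g b) = b).

Definition normal_mono {A B : AlgLat} (f : hom A B) : Prop :=
  (forall x y, f x = f y -> x = y) /\
  (forall (b : B) (a : A), le b (f a) -> exists a', f a' = b).

Definition upset_iso {L M : CLat} (x0 : L) (phi : {y : L | le x0 y} -> M) : Prop :=
  (forall m : M, exists y, phi y = m) /\
  (forall y z, le (proj1_sig y) (proj1_sig z) <-> le (phi y) (phi z)).

Lemma join2_upper_r {L : CLat} (x0 y : L) : le x0 (join2 y x0).
Proof. apply sup_ub; now right. Qed.

Definition normal_epi {A B : AlgLat} (f : hom A B) : Prop :=
  exists (x0 : A) (phi : {y : A | le x0 y} -> B),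
    upset_iso x0 phi /\
    forall y : A, f y = phi (exist _ (join2 y x0) (join2_upper_r x0 y)).

Definition cls := forall A B : AlgLat, hom A B -> Prop.

Definition is_pullback {A B A' B' : AlgLat}
  (i : hom A B) (j : hom A A') (j' : hom B B') (i' : hom A' B') : Prop :=
  forall (W : AlgLat) (p : hom W A') (q : hom W B), comp_eq p i' q j' ->
    exists u : hom W A, (forall w, j (u w) = p w) /\ (forall w, i (u w) = q w) /\
      forall v : hom W A, (forall w, j (v w) = p w) -> (forall w, i (v w) = q w) ->
        forall w, v w = u w.

Definition is_pushout {A B A' B' : AlgLat}
  (i : hom A B) (j : hom A A') (j' : hom B B') (i' : hom A' B') : Prop :=
  forall (W : AlgLat) (p : hom A' W) (q : hom B W), comp_eq j p i q ->
    exists u : hom B' W, (forall a, u (i' a) = p a) /\ (forall b, u (j' b) = q b) /\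
      forall v : hom B' W, (forall a, v (i' a) = p a) -> (forall b, v (j' b) = q b) ->
        forall b', v b' = u b'.

Definition zero_object (Z : AlgLat) : Prop :=
  forall A : AlgLat,
    (exists f : hom Z A, forall g : hom Z A, forall z, g z = f z) /\
    (exists f : hom A Z, forall g : hom A Z, forall a, g a = f a).

Definition proto_exact (M E : cls) : Prop :=
  (exists Z : AlgLat, zero_object Z) /\
  (forall (Z : AlgLat), zero_object Z -> forall (A : AlgLat),
     (forall f : hom Z A, M Z A f) /\ (forall g : hom A Z, E A Z g)) /\
  (forall (A B : AlgLat) (f : hom A B), is_iso f -> M A B f /\ E A B f) /\
  (forall (A B C : AlgLat) (f : hom A B) (g : hom B C) (h : hom A C),
     (forall a, h a = g (f a)) ->
     (M A B f -> M B C g -> M A C h) /\ (E A B f -> E B C g -> E A C h)) /\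
  (forall (A B A' B' : AlgLat) (i : hom A B) (j : hom A A') (j' : hom B B') (i' : hom A' B'),
     M A B i -> M A' B' i' -> E A A' j -> E B B' j' -> comp_eq i j' j i' ->
     (is_pullback i j j' i' <-> is_pushout i j j' i')) /\
  (forall (A' B B' : AlgLat) (i' : hom A' B') (j' : hom B B'),
     M A' B' i' -> E B B' j' ->
     exists (A : AlgLat) (i : hom A B) (j : hom A A'),
       M A B i /\ E A A' j /\ comp_eq i j' j i' /\
       is_pullback i j j' i' /\ is_pushout i j j' i') /\
  (forall (A B A' : AlgLat) (i : hom A B) (j : hom A A'),
     M A B i -> E A A' j ->
     exists (B' : AlgLat) (i' : hom A' B') (j' : hom B B'),
       M A' B' i' /\ E B B' j' /\ comp_eq i j' j i' /\
       is_pullback i j j' i' /\ is_pushout i j j' i').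

Definition NM : cls := fun A B f => normal_mono f.
Definition NE : cls := fun A B f => normal_epi f.

(* Main.v *)
Require Import Defs.
From Stdlib Require Import List ClassicalEpsilon ProofIrrelevance.

Section Lat.
Context {L : CLat}.
Implicit Types x y z a b c : L.

Lemma lrefl x : le x x. Proof. apply le_refl. Qed.
Lemma ltrans x y z : le x y -> le y z -> le x z. Proof. apply le_trans. Qed.
Lemma lanti x y : le x y -> le y x -> x = y. Proof. apply le_antisym. Qed.
Lemma sub (S : L -> Prop) x : S x -> le x (sup S). Proof. apply sup_ub. Qed.
Lemma sleast (S : L -> Prop) y : (forall x, S x -> le x y) -> le (sup S) y. Proof. apply sup_least. Qed.

Lemma sup_ext (S T : L -> Prop) : (forall x, S x <-> T x) -> sup S = sup T.
Proof. intros H; apply lanti; apply sleast; intros x Hx; apply sub; apply H; auto. Qed.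

Definition lbot : L := sup (fun _ => False).
Definition ltop : L := sup (fun _ => True).
Lemma bot_least x : le lbot x. Proof. apply sleast; intros _ []. Qed.
Lemma top_greatest x : le x ltop. Proof. apply sub; exact I. Qed.

Lemma join2_l a b : le a (join2 a b). Proof. apply sub; now left. Qed.
Lemma join2_r a b : le b (join2 a b). Proof. apply sub; now right. Qed.
Lemma join2_lub a b c : le a c -> le b c -> le (join2 a b) c.
Proof. intros; unfold join2; apply sleast; intros x [->| ->]; auto. Qed.
Lemma join2_lub_iff a b c : le (join2 a b) c <-> le a c /\ le b c.
Proof. split.
  - intros H; split; eapply ltrans; [apply join2_l| exact H | apply join2_r | exact H].
  - intros [? ?]; now apply join2_lub. Qed.
End Lat.
Arguments lbot {L}. Arguments ltop {L}.

Ltac lat0 := first [ assumption | apply lrefl | apply bot_least | apply top_greatest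
  | apply join2_lub; lat0
  | eapply ltrans; [| apply join2_l]; lat0
  | eapply ltrans; [| apply join2_r]; lat0 ].
Ltac lat := first [ lat0 | eapply ltrans; [eassumption| lat0] ].
Ltac lanti' := apply lanti; lat.

Section Lat2.
Context {L : CLat}.
Implicit Types x y z a b c : L.
Lemma join2_bot a : join2 a lbot = a. Proof. lanti'. Qed.
Lemma join2_abs a b : le b a -> join2 a b = a. Proof. intros; lanti'. Qed.
Lemma join2_abs' a b : le a b -> join2 a b = b. Proof. intros; lanti'. Qed.
End Lat2.

Section Hom.
Context {A B : AlgLat} (f : hom A B).
Lemma hom_join2 a b : f (join2 a b) = join2 (f a) (f b).
Proof. unfold join2; rewrite hom_sup; apply sup_ext; intros z; split.
  - intros [x [[->| ->] ->]]; auto.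
  - intros [->| ->]; [exists a | exists b]; auto. Qed.
Lemma hom_mono a b : le a b -> le (f a) (f b).
Proof. intros H; rewrite <- (join2_abs' _ _ H), hom_join2; apply join2_l. Qed.
Lemma hom_bot : f lbot = lbot.
Proof. unfold lbot; rewrite hom_sup; apply sup_ext; intros z; split; [intros [x [[] _]] | intros []]. Qed.
Lemma hom_list (F : list A) : f (sup (fun y => In y F)) = sup (fun z => In z (map f F)).
Proof. rewrite hom_sup; apply sup_ext; intros z; split.
  - intros [x [H ->]]; now apply in_map.
  - intros H; apply in_map_iff in H as [x [<- H]]; exists x; auto. Qed.
End Hom.

Lemma sup_mono {L : CLat} (S T : L -> Prop) : (forall x, S x -> T x) -> le (sup S) (sup T).
Proof. intros H; apply sleast; intros; apply sub; auto. Qed.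

Lemma compact_list {L : CLat} (F : list L) : (forall c, In c F -> compact c) -> compact (sup (fun y => In y F)).
Proof.
  induction F as [|a F IH]; intros HF S Hle.
  - exists nil; split; [intros _ []| apply lrefl].
  - assert (Ha : compact a) by (apply HF; now left).
    assert (HF' : compact (sup (fun y => In y F))) by (apply IH; intros; apply HF; now right).
    destruct (Ha S) as [G1 [H1 H1']]. { eapply ltrans; [|exact Hle]; apply sub; now left. }
    destruct (HF' S) as [G2 [H2 H2']]. { eapply ltrans; [|exact Hle]; apply sup_mono; intros; now right. }
    exists (G1 ++ G2); split.
    + intros y Hy; apply in_app_or in Hy as [?|?]; auto.
    + apply sleast; intros y [<-|Hy].
      * eapply ltrans; [exact H1'|]; apply sup_mono; intros; apply in_or_app; now left.
      * eapply ltrans; [apply (sub (fun z => In z F)); exact Hy|]; eapply ltrans; [exact H2'|].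
        apply sup_mono; intros; apply in_or_app; now right.
Qed.

Lemma compact_bot {L : CLat} : compact (@lbot L).
Proof. intros S _; exists nil; split; [intros _ []| apply bot_least]. Qed.

Lemma lift_list {X Y} (f : X -> Y) (S : X -> Prop) (F : list Y) :
  (forall z, In z F -> exists s, S s /\ z = f s) -> exists G, (forall s, In s G -> S s) /\ F = map f G.
Proof.
  induction F as [|a F IH]; intros H.
  - exists nil; split; [intros _ []| reflexivity].
  - destruct (H a (or_introl eq_refl)) as [s [Hs ->]].
    destruct IH as [G [HG ->]]. { intros; apply H; now right. }
    exists (s :: G); split; [intros y [<-|?]; auto | reflexivity].
Qed.

Lemma lift_or {X} {L : CLat} (f : X -> L) (S : X -> Prop) (m : L) (F : list L) :
  (forall z, In z F -> (exists s, S s /\ z = f s) \/ z = m) ->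
  exists G, (forall s, In s G -> S s) /\ le (sup (fun z => In z F)) (join2 (sup (fun z => In z (map f G))) m).
Proof.
  induction F as [|a F IH]; intros H.
  - exists nil; split; [intros _ []| apply sleast; intros _ []].
  - destruct IH as [G [HG HG']]. { intros; apply H; now right. }
    destruct (H a (or_introl eq_refl)) as [[s [Hs ->]]| ->].
    + exists (s :: G); split; [intros y [<-|?]; auto|].
      apply sleast; intros y [<-|Hy].
      * eapply ltrans; [|apply join2_l]; apply sub; now left.
      * eapply ltrans; [apply (sub (fun z => In z F)); exact Hy|]; eapply ltrans; [exact HG'|].
        apply join2_lub; [|apply join2_r]; eapply ltrans; [|apply join2_l].
        apply sup_mono; intros; now right.
    + exists G; split; auto. apply sleast; intros y [<-|Hy]; [apply join2_r|].
      eapply ltrans; [apply (sub (fun z => In z F)); exact Hy| exact HG'].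
Qed.

Section Inj.
Context {A B : AlgLat} (i : hom A B) (Hinj : forall x y, i x = i y -> x = y).
Lemma inj_le x y : le (i x) (i y) -> le x y.
Proof. intros H. assert (E : join2 x y = y) by (apply Hinj; rewrite hom_join2; now apply join2_abs').
  rewrite <- E; apply join2_l. Qed.
Lemma inj_compact c : compact (i c) -> compact c.
Proof.
  intros Hc S Hle. apply (hom_mono i) in Hle; rewrite hom_sup in Hle.
  destruct (Hc _ Hle) as [F [HF HF']].
  destruct (lift_list i S F HF) as [G [HG ->]].
  exists G; split; auto. apply inj_le; now rewrite hom_list.
Qed.
End Inj.

Definition NEc {A B : AlgLat} (f : hom A B) (x0 : A) : Prop :=
  (forall b, exists a, f a = b) /\ (forall a b, le (f a) (f b) <-> le a (join2 b x0)).

Lemma sig_eq {X : Type} (P : X -> Prop) (v w : X) (p : P v) (q : P w) : v = w -> exist P v p = exist P w q.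
Proof. intros ->; f_equal; apply proof_irrelevance. Qed.

Lemma NE_c {A B : AlgLat} (f : hom A B) : normal_epi f -> exists x0, NEc f x0.
Proof.
  intros [x0 [phi [[Hs Ho] Heq]]]. exists x0; split.
  - intros m; destruct (Hs m) as [[v pv] <-]; exists v; rewrite Heq; f_equal; apply sig_eq.
    now apply join2_abs.
  - intros a b; rewrite !Heq, <- Ho; simpl; rewrite join2_lub_iff; split.
    + intros [? ?]; auto.
    + intros; split; auto; apply join2_r.
Qed.

Lemma c_NE {A B : AlgLat} (f : hom A B) x0 : NEc f x0 -> normal_epi f.
Proof.
  intros [Hs Ho].
  assert (Hj : forall a, f (join2 a x0) = f a).
  { intros a; apply lanti; apply Ho; lat. }
  exists x0, (fun y => f (proj1_sig y)); split; [split|].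
  - intros m; destruct (Hs m) as [a <-]; exists (exist _ (join2 a x0) (join2_r a x0)); simpl; auto.
  - intros [y py] [z pz]; simpl; rewrite Ho, (join2_abs z x0 pz); tauto.
  - intros y; simpl; now rewrite Hj.
Qed.

Section NEc.
Context {A B : AlgLat} (f : hom A B) (x0 : A) (H : NEc f x0).
Lemma ne_join a : f (join2 a x0) = f a.
Proof. destruct H as [_ Ho]; apply lanti; apply Ho; lat. Qed.
Lemma ne_bot_iff a : f a = lbot <-> le a x0.
Proof. destruct H as [_ Ho]; rewrite <- (hom_bot f); split.
  - intros E; assert (Hl : le (f a) (f lbot)) by (rewrite E; apply lrefl).
    apply Ho in Hl; eapply ltrans; [exact Hl|]; lat.
  - intros; apply lanti; [apply Ho; lat | apply (hom_mono f); apply bot_least]. Qed.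
Lemma ne_x0 : f x0 = lbot. Proof. apply ne_bot_iff, lrefl. Qed.
End NEc.

Lemma mono_factor {W A B : AlgLat} (i : hom A B) (Hinj : forall x y, i x = i y -> x = y)
  (q : hom W B) (u : W -> A) (H : forall w, i (u w) = q w) : exists h : hom W A, forall w, h w = u w.
Proof.
  unshelve eexists (Build_hom W A u _ _); [| |reflexivity].
  - intros S; apply Hinj; rewrite H, !hom_sup; apply sup_ext; intros z; split.
    + intros [w [Hw ->]]; exists (u w); split; [exists w; auto| auto].
    + intros [a [[w [Hw ->]] ->]]; exists w; auto.
  - intros c Hc; apply (inj_compact i Hinj); rewrite H; now apply hom_compact.
Qed.

Lemma epi_lift_compact {A C : AlgLat} (f : hom A C) (Hs : forall b, exists a, f a = b) (b : C) :
  compact b -> exists c, compact c /\ f c = b.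
Proof.
  intros Hb. destruct (Hs b) as [a <-].
  assert (Ea := alat_alg A a).
  assert (Hle : le (f a) (sup (img f (fun c => compact c /\ le c a)))) by (rewrite <- hom_sup, <- Ea; apply lrefl).
  destruct (Hb _ Hle) as [F [HF HF']].
  destruct (lift_list f _ F HF) as [G [HG ->]].
  exists (sup (fun y => In y G)); split.
  - apply compact_list; intros; now apply HG.
  - apply lanti.
    + apply hom_mono; apply sleast; intros; now apply HG.
    + now rewrite hom_list.
Qed.

Lemma epi_factor {A C D : AlgLat} (f : hom A C) (Hs : forall b, exists a, f a = b)
  (g : hom A D) (h : C -> D) (H : forall a, h (f a) = g a) : exists k : hom C D, forall c, k c = h c.
Proof.
  unshelve eexists (Build_hom C D h _ _); [| |reflexivity].
  - intros S. set (T := fun a => S (f a)).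
    assert (E : sup S = f (sup T)).
    { rewrite hom_sup; apply sup_ext; intros z; split.
      - intros Hz; destruct (Hs z) as [a <-]; exists a; split; auto.
      - intros [a [Ha ->]]; exact Ha. }
    rewrite E, H, hom_sup; apply sup_ext; intros z; split.
    + intros [a [Ha ->]]; exists (f a); split; auto.
    + intros [c [Hc ->]]; destruct (Hs c) as [a <-]; exists a; split; auto.
  - intros c Hc; destruct (epi_lift_compact f Hs c Hc) as [c' [Hc' <-]]; rewrite H; now apply hom_compact.
Qed.

Lemma hom_ext {A B : AlgLat} (f : hom A B) (h : A -> B) : (forall a, f a = h a) ->
  (forall S, h (sup S) = sup (img h S)) /\ (forall c, compact c -> compact (h c)).
Proof. intros E; split.
  - intros S; rewrite <- E, hom_sup; apply sup_ext; intros z; split; intros [x [? ->]]; exists x; rewrite ?E; auto.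
  - intros c Hc; rewrite <- E; now apply hom_compact. Qed.

Definition zh (A B : AlgLat) : hom A B.
Proof. refine (Build_hom A B (fun _ => lbot) _ _).
  - intros S; apply lanti; [apply bot_least| apply sleast; intros x [_ [_ ->]]; apply lrefl].
  - intros; apply compact_bot.
Defined.

Definition idh (A : AlgLat) : hom A A.
Proof. refine (Build_hom A A (fun a => a) _ _).
  - intros S; apply sup_ext; intros z; split; [intros Hz; exists z; auto| intros [x [Hx ->]]; auto].
  - auto.
Defined.

Definition em (P : Prop) : bool := if excluded_middle_informative P then true else false.
Lemma em_true (P : Prop) : em P = true <-> P.
Proof. unfold em; destruct (excluded_middle_informative P); split; auto; discriminate. Qed.

Definition TwoC : CLat.
Proof.
  refine (@Build_CLat bool (fun a b => a = true -> b = true) _ _ _ (fun S => em (S true)) _ _).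
  - auto.
  - auto.
  - intros [] [] H1 H2; first [ reflexivity | symmetry; apply H1; reflexivity | apply H2; reflexivity ].
  - intros S [] Hx Ht; [now apply (proj2 (em_true _)) | discriminate].
  - intros S y H Hs; apply (proj1 (em_true _)) in Hs; exact (H true Hs eq_refl).
Defined.

Lemma two_alg : algebraic TwoC.
Proof.
  intros x. assert (Hc : forall b : TwoC, compact b).
  { intros [] S H; [|exists nil; split; [intros _ []| discriminate]].
    exists (true :: nil); split; [intros y [<-|[]]; now apply (proj1 (em_true _)) in H|].
    intros _; apply (proj2 (em_true _)); now left. }
  apply lanti.
  - apply sub; split; [apply Hc| apply lrefl].
  - apply sleast; intros y [_ Hy]; exact Hy.
Qed.
Definition Two : AlgLat := {| alat := TwoC; alat_alg := two_alg |}.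
Lemma two_compact (b : Two) : compact b.
Proof. intros S H; destruct b; [|exists nil; split; [intros _ []| discriminate]].
    exists (true :: nil); split; [intros y [<-|[]]; now apply (proj1 (em_true _)) in H|].
    intros _; apply (proj2 (em_true _)); now left. Qed.

Definition chi {L : AlgLat} (m : L) : hom L Two.
Proof.
  refine (Build_hom L Two (fun b => em (~ le b m)) _ _).
  - intros S. apply lanti.
    + intros H1; apply (proj1 (em_true _)) in H1; apply (proj2 (em_true _)).
      destruct (classic (exists s, S s /\ ~ le s m)) as [[s [Hs Hn]]|Hn].
      * exists s; split; auto. symmetry; now apply (proj2 (em_true _)).
      * exfalso; apply H1, sleast; intros x Hx; apply NNPP; intros Hx'; apply Hn; eauto.
    + intros H1; apply (proj1 (em_true _)) in H1; destruct H1 as [s [Hs E]]; symmetry in E; apply (proj1 (em_true _)) in E; apply (proj2 (em_true _)).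
      intros H; apply E; eapply ltrans; [apply sub; exact Hs| exact H].
  - intros; apply two_compact.
Defined.
Lemma chi_false {L : AlgLat} (m b : L) : chi m b = false <-> le b m.
Proof. simpl; unfold em; destruct excluded_middle_informative as [H|H]; split; try discriminate; auto.
  intros; exfalso; auto. intros; apply NNPP; auto. Qed.

Definition tw {L : AlgLat} (c : L) (Hc : compact c) : hom Two L.
Proof.
  refine (Build_hom Two L (fun b => if b then c else lbot) _ _).
  - intros S; simpl; unfold em; destruct excluded_middle_informative as [H|H].
    + apply lanti; [apply sub; exists true; auto|].
      apply sleast; intros x [[] [_ ->]]; [apply lrefl| apply bot_least].
    + apply lanti; [apply bot_least|].
      apply sleast; intros x [[] [Hb ->]]; [contradiction| apply lrefl].
  - intros [] _; [exact Hc| apply compact_bot].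
Defined.

Section Down.
Context (B : CLat) (t : B).
Definition dT := {b : B | le b t}.
Definition dv (x : dT) : B := proj1_sig x.
Definition dle (x y : dT) : Prop := le (dv x) (dv y).
Lemma dsup_pf (S : dT -> Prop) : le (sup (img dv S)) t.
Proof. apply sleast; intros x [[v pv] [_ ->]]; exact pv. Qed.
Definition dsup (S : dT -> Prop) : dT := exist _ (sup (img dv S)) (dsup_pf S).
Lemma dv_inj (x y : dT) : dv x = dv y -> x = y.
Proof. destruct x, y; simpl; apply sig_eq. Qed.
Definition DownC : CLat.
Proof.
  refine (@Build_CLat dT dle _ _ _ dsup _ _); unfold dle.
  - intros; apply lrefl.
  - intros x y z; apply ltrans.
  - intros x y H1 H2; apply dv_inj, lanti; auto.
  - intros S x Hx; apply sub; exists x; auto.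
  - intros S y H; apply sleast; intros z [x [Hx ->]]; auto.
Defined.
End Down.

Lemma down_compact_glob (B : CLat) (t : B) (c : DownC B t) : compact (dv B t c) -> compact c.
Proof.
  intros Hc S Hle. simpl in Hle; unfold dle in Hle; simpl in Hle.
  destruct (Hc _ Hle) as [F [HF HF']].
  destruct (lift_list (dv B t) S F HF) as [G [HG ->]].
  exists G; split; auto. simpl; unfold dle; simpl.
  eapply ltrans; [exact HF'|]. apply sup_mono. intros z Hz; apply in_map_iff in Hz as [x [<- Hx]]; exists x; auto.
Qed.

Lemma down_compact_loc (B : AlgLat) (t : B) (c : DownC B t) : compact c -> compact (dv B t c).
Proof.
  intros Hc.
  set (Q := fun d : DownC B t => compact (dv B t d) /\ le (dv B t d) (dv B t c)).
  assert (Hle : le c (sup Q)).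
  { simpl; unfold dle; simpl. rewrite (alat_alg B (dv B t c)) at 1. apply sleast; intros z [Hz Hzc].
    assert (pz : le z t) by (eapply ltrans; [exact Hzc| exact (proj2_sig c)]).
    apply sub; exists (exist _ z pz); split; [split; auto| reflexivity]. }
  destruct (Hc _ Hle) as [F [HF HF']].
  assert (E : dv B t c = sup (fun z => In z (map (dv B t) F))).
  { apply lanti.
    - eapply ltrans; [exact HF'|]; simpl; apply sup_mono; intros z [x [Hx ->]]; now apply in_map.
    - apply sleast; intros z Hz; apply in_map_iff in Hz as [x [<- Hx]]; apply HF; auto. }
  rewrite E; apply compact_list; intros z Hz; apply in_map_iff in Hz as [x [<- Hx]]; apply HF; auto.
Qed.

Lemma down_alg (B : AlgLat) (t : B) : algebraic (DownC B t).
Proof.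
  intros x. apply lanti.
  - simpl; unfold dle; simpl. rewrite (alat_alg B (dv B t x)) at 1. apply sleast; intros z [Hz Hzx].
    assert (pz : le z t) by (eapply ltrans; [exact Hzx| exact (proj2_sig x)]).
    apply sub; exists (exist _ z pz); split; [|reflexivity]. split; [apply down_compact_glob; exact Hz| exact Hzx].
  - apply sleast; intros y [_ Hy]; exact Hy.
Qed.
Definition Down (B : AlgLat) (t : B) : AlgLat := {| alat := DownC B t; alat_alg := down_alg B t |}.

Definition dvh (B : AlgLat) (t : B) : hom (Down B t) B.
Proof. refine (Build_hom (Down B t) B (dv B t) _ _).
  - intros S; reflexivity.
  - intros c Hc; now apply down_compact_loc.
Defined.

Section Up.
Context (B : CLat) (y : B).
Definition uT := {b : B | le y b}.
Definition uv (x : uT) : B := proj1_sig x.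
Definition ule (x z : uT) : Prop := le (uv x) (uv z).
Definition usup (S : uT -> Prop) : uT := exist _ (join2 (sup (img uv S)) y) (join2_r _ _).
Lemma uv_inj (x z : uT) : uv x = uv z -> x = z.
Proof. destruct x, z; simpl; apply sig_eq. Qed.
Definition UpC : CLat.
Proof.
  refine (@Build_CLat uT ule _ _ _ usup _ _); unfold ule.
  - intros; apply lrefl.
  - intros x w z; apply ltrans.
  - intros x w H1 H2; apply uv_inj, lanti; auto.
  - intros S x Hx; simpl; eapply ltrans; [|apply join2_l]; apply sub; exists x; auto.
  - intros S w H; simpl; apply join2_lub; [|exact (proj2_sig w)]. apply sleast; intros z [x [Hx ->]]; auto.
Defined.
End Up.

Lemma up_compact (B : CLat) (y k : B) : compact k -> compact (exist (fun b => le y b) (join2 k y) (join2_r k y) : UpC B y).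
Proof.
  intros Hk S Hle. simpl in Hle; unfold ule in Hle; simpl in Hle.
  assert (Hk' : le k (sup (fun z => img (uv B y) S z \/ z = y))).
  { eapply ltrans; [apply join2_l|]; eapply ltrans; [exact Hle|].
    apply join2_lub; [apply sup_mono; auto| apply sub; now right]. }
  destruct (Hk _ Hk') as [F [HF HF']].
  destruct (lift_or (uv B y) S y F) as [G [HG HG']].
  { intros z Hz; destruct (HF z Hz) as [[x [Hx ->]]| ->]; [left; eauto| right; auto]. }
  exists G; split; auto. simpl; unfold ule; simpl.
  apply join2_lub; [|apply join2_r]. eapply ltrans; [exact HF'|]. eapply ltrans; [exact HG'|].
  apply join2_lub; [|apply join2_r]. eapply ltrans; [|apply join2_l].
  apply sup_mono; intros z Hz; apply in_map_iff in Hz as [x [<- Hx]]; exists x; auto.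
Qed.

Lemma up_alg (B : AlgLat) (y : B) : algebraic (UpC B y).
Proof.
  intros x. apply lanti.
  - simpl; unfold ule; simpl. eapply ltrans; [|apply join2_l].
    rewrite (alat_alg B (uv B y x)) at 1. apply sleast; intros z [Hz Hzx].
    eapply ltrans; [|apply sub; exists (exist _ (join2 z y) (join2_r z y)); split; [|reflexivity]].
    + apply join2_l.
    + split; [apply up_compact; exact Hz|]. simpl; unfold ule; simpl. apply join2_lub; auto. exact (proj2_sig x).
  - apply sleast; intros w [_ Hw]; exact Hw.
Qed.
Definition Up (B : AlgLat) (y : B) : AlgLat := {| alat := UpC B y; alat_alg := up_alg B y |}.

Lemma bool_false_iff (x y : bool) : (x = false <-> y = false) -> x = y.
Proof. destruct x, y; intuition congruence. Qed.

Lemma two_bot : (lbot : Two) = false.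
Proof. apply Bool.not_true_is_false; intros H; apply (proj1 (em_true _)) in H; exact H. Qed.

Section Square.
Context {A B A' B' : AlgLat} (i : hom A B) (j : hom A A') (j' : hom B B') (i' : hom A' B')
  (x0 : A) (y0 : B) (Hi : normal_mono i) (Hi' : normal_mono i') (Hj : NEc j x0) (Hj' : NEc j' y0)
  (Hc : comp_eq i j' j i').

Lemma sq_pb : le y0 (i x0) -> is_pullback i j j' i'.
Proof using All.
  intros C W p q Hpq.
  assert (Hex : forall w, exists a, i a = q w).
  { intros w. destruct (proj1 Hj (p w)) as [a Ha].
    assert (H1 : le (j' (q w)) (j' (i ltop))).
    { rewrite <- (Hpq w), <- Ha, <- (Hc a). apply hom_mono, hom_mono, top_greatest. }
    apply (proj2 Hj') in H1.
    apply (proj2 Hi) with (a := ltop). eapply ltrans; [exact H1|].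
    apply join2_lub; [apply lrefl|]. eapply ltrans; [exact C|]. apply hom_mono, top_greatest. }
  set (u0 := fun w => proj1_sig (constructive_indefinite_description _ (Hex w))).
  assert (Hu0 : forall w, i (u0 w) = q w) by (intros w; exact (proj2_sig (constructive_indefinite_description _ (Hex w)))).
  destruct (mono_factor i (proj1 Hi) q u0 Hu0) as [u Hu].
  exists u; split; [|split].
  - intros w; apply (proj1 Hi'). rewrite <- (Hc (u w)), Hu, Hu0. symmetry; apply Hpq.
  - intros w; rewrite Hu; apply Hu0.
  - intros v Hv1 Hv2 w; apply (proj1 Hi); rewrite Hv2, Hu, Hu0; reflexivity.
Qed.

Lemma sq_po : le y0 (i x0) -> is_pushout i j j' i'.
Proof using All.
  intros C W p q Hpq.
  assert (qy0 : q y0 = lbot).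
  { apply lanti; [|apply bot_least]. eapply ltrans; [apply hom_mono; exact C|].
    rewrite <- (Hpq x0), (ne_x0 j x0 Hj), hom_bot; apply lrefl. }
  assert (Hw : forall b1 b2, j' b1 = j' b2 -> q b1 = q b2).
  { assert (Hw1 : forall b1 b2, j' b1 = j' b2 -> le (q b1) (q b2)).
    { intros b1 b2 E. assert (H1 : le (j' b1) (j' b2)) by (rewrite E; apply lrefl).
      apply (proj2 Hj') in H1. apply (hom_mono q) in H1. rewrite hom_join2, qy0, join2_bot in H1; exact H1. }
    intros; apply lanti; apply Hw1; auto. }
  set (sel := fun b' => proj1_sig (constructive_indefinite_description _ (proj1 Hj' b'))).
  assert (Hsel : forall b', j' (sel b') = b') by (intros b'; exact (proj2_sig (constructive_indefinite_description _ (proj1 Hj' b')))).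
  destruct (epi_factor j' (proj1 Hj') q (fun b' => q (sel b'))) as [u Hu].
  { intros b; apply Hw; apply Hsel. }
  assert (Hu2 : forall b, u (j' b) = q b) by (intros b; rewrite Hu; apply Hw, Hsel).
  exists u; split; [|split].
  - intros a'; destruct (proj1 Hj a') as [a <-]. rewrite <- (Hc a), Hu2; symmetry; apply Hpq.
  - exact Hu2.
  - intros v _ Hv b'; destruct (proj1 Hj' b') as [b <-]; rewrite Hv, Hu2; reflexivity.
Qed.

Lemma pb_C : is_pullback i j j' i' -> le y0 (i x0).
Proof using All.
  intros Hpb. rewrite (alat_alg B y0). apply sleast; intros c [Hcc Hcy].
  destruct (Hpb Two (zh Two A') (tw c Hcc)) as [u [Hu1 [Hu2 _]]].
  { intros w; simpl. rewrite hom_bot. destruct w.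
    - symmetry; apply (ne_bot_iff j' y0 Hj'); exact Hcy.
    - symmetry; apply hom_bot. }
  specialize (Hu1 true); specialize (Hu2 true); simpl in Hu1, Hu2.
  rewrite <- Hu2. apply hom_mono. apply (ne_bot_iff j x0 Hj); exact Hu1.
Qed.

Lemma po_C : is_pushout i j j' i' -> le y0 (i x0).
Proof using All.
  intros Hpo.
  destruct (Hpo Two (chi (lbot : A')) (chi (i x0))) as [u [_ [Hu2 _]]].
  { intros a; apply bool_false_iff; rewrite !chi_false. split.
    - intros H. apply hom_mono. apply (ne_bot_iff j x0 Hj). apply lanti; auto; apply bot_least.
    - intros H. apply (inj_le i (proj1 Hi)) in H. apply (ne_bot_iff j x0 Hj) in H; rewrite H; apply lrefl. }
  apply chi_false. rewrite <- Hu2, (ne_x0 j' y0 Hj'), hom_bot. apply two_bot.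
Qed.
End Square.

Definition comph {A B C : AlgLat} (f : hom A B) (g : hom B C) : hom A C.
Proof. refine (Build_hom A C (fun a => g (f a)) _ _).
  - intros S; rewrite !hom_sup; apply sup_ext; intros z; split.
    + intros [b [[a [Ha ->]] ->]]; exists a; auto.
    + intros [a [Ha ->]]; exists (f a); split; auto; exists a; auto.
  - intros c Hc; now apply hom_compact, hom_compact.
Defined.

Definition UnitC : CLat.
Proof. refine (@Build_CLat unit (fun _ _ => True) _ _ _ (fun _ => tt) _ _); auto.
  intros [] [] _ _; reflexivity. Defined.
Lemma unit_alg : algebraic UnitC. Proof. intros []; reflexivity. Qed.
Definition UnitL : AlgLat := {| alat := UnitC; alat_alg := unit_alg |}.

Lemma unit_zero : zero_object UnitL.
Proof.
  intros A; split.
  - exists (zh UnitL A); intros g []. simpl. change tt with (lbot : UnitL). apply hom_bot.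
  - exists (zh A UnitL); intros g a; destruct (g a), (zh A UnitL a); reflexivity.
Qed.

Lemma zero_sub (Z : AlgLat) : zero_object Z -> forall z : Z, z = lbot.
Proof.
  intros HZ z. destruct (proj1 (HZ Z)) as [f Hf].
  transitivity (f z); [exact (Hf (idh Z) z)| symmetry; exact (Hf (zh Z Z) z)].
Qed.

Lemma ne_eq_join {A B : AlgLat} (f : hom A B) x0 : NEc f x0 -> forall a b, f a = f b -> join2 a x0 = join2 b x0.
Proof. intros [_ Ho] a b E. apply lanti; apply join2_lub; try apply join2_r; apply Ho; rewrite E; apply lrefl. Qed.

Definition jup (B : AlgLat) (y0 : B) : hom B (Up B y0).
Proof.
  refine (Build_hom B (Up B y0) (fun b => exist (fun z => le y0 z) (join2 b y0) (join2_r b y0)) _ _).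
  - intros S; apply uv_inj; simpl. apply lanti.
    + apply join2_lub; [|apply join2_r]. eapply ltrans; [|apply join2_l]. apply sleast; intros x Hx.
      eapply ltrans; [apply (join2_l x y0)|]. apply sub. exists (exist (fun z => le y0 z) (join2 x y0) (join2_r x y0)).
      split; [exists x; auto| reflexivity].
    + apply join2_lub; [|apply join2_r]. apply sleast; intros z [w [[x [Hx ->]] ->]]. simpl.
      apply join2_lub; [|apply join2_r]. eapply ltrans; [|apply join2_l]. apply sub; exact Hx.
  - intros c Hc; exact (up_compact B y0 c Hc).
Defined.

Theorem theoremB : proto_exact NM NE.
Proof.
  split; [exists UnitL; apply unit_zero|].
  split.
  {
    intros Z HZ A. pose proof (zero_sub Z HZ) as Hs. split.
    - intros f; split.
      + intros x y _; now rewrite (Hs x), (Hs y).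
      + intros b a Hb. exists a. apply lanti; [|exact Hb].
        rewrite (Hs a), hom_bot; apply bot_least.
    - intros g; apply (c_NE g ltop); split.
      + intros b; exists ltop; now rewrite (Hs b), (Hs (g ltop)).
      + intros a b; rewrite (Hs (g a)), (Hs (g b)); split; intros _; [lat|apply lrefl]. }
  split.
  {
    intros A B f [g [Hgf Hfg]]; split.
    - split.
      + intros x y E; now rewrite <- (Hgf x), <- (Hgf y), E.
      + intros b a _; exists (g b); auto.
    - apply (c_NE f lbot); split.
      + intros b; exists (g b); auto.
      + intros a b; rewrite join2_bot; split.
        * intros H; apply (hom_mono g) in H; now rewrite !Hgf in H.
        * apply hom_mono. }
  split.
  {
    intros A B C f g h Hh; split.
    - intros [Hf1 Hf2] [Hg1 Hg2]; split.
      + intros x y E; rewrite !Hh in E; auto.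
      + intros c a Hc. rewrite Hh in Hc. destruct (Hg2 c (f a) Hc) as [b1 <-].
        apply (inj_le g Hg1) in Hc. destruct (Hf2 b1 a Hc) as [a' <-]. exists a'; auto.
    - intros HEf HEg. destruct (NE_c f HEf) as [x0 Hf]. destruct (NE_c g HEg) as [y0 Hg].
      destruct (proj1 Hf y0) as [x1 Hx1].
      set (x2 := join2 x1 x0).
      assert (Hx2 : f x2 = y0) by (unfold x2; rewrite (ne_join f x0 Hf); exact Hx1).
      apply (c_NE h x2); split.
      + intros c; destruct (proj1 Hg c) as [b <-]; destruct (proj1 Hf b) as [a <-]; exists a; auto.
      + intros a b; rewrite !Hh, (proj2 Hg), <- Hx2, <- hom_join2, (proj2 Hf).
        assert (E : join2 (join2 b x2) x0 = join2 b x2) by (unfold x2; lanti').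
        rewrite E; tauto. }
  split.
  {
    intros A B A' B' i j j' i' Hi Hi' Hj Hj' Hc.
    destruct (NE_c j Hj) as [x0 Hx0]; destruct (NE_c j' Hj') as [y0 Hy0]. split.
    - intros Hpb; apply (sq_po i j j' i' x0 y0 Hi Hi' Hx0 Hy0 Hc).
      exact (pb_C i j j' i' x0 y0 Hi Hi' Hx0 Hy0 Hc Hpb).
    - intros Hpo; apply (sq_pb i j j' i' x0 y0 Hi Hi' Hx0 Hy0 Hc).
      exact (po_C i j j' i' x0 y0 Hi Hi' Hx0 Hy0 Hc Hpo). }
  split.
  {
    intros A' B B' i' j' Hi' Hj'. destruct (NE_c j' Hj') as [y0 Hy0].
    destruct (proj1 Hy0 (i' ltop)) as [b1 Hb1].
    set (t := join2 b1 y0).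
    assert (Ht : j' t = i' ltop) by (unfold t; rewrite (ne_join j' y0 Hy0); exact Hb1).
    set (q := comph (dvh B t) j').
    assert (Hex : forall a : Down B t, exists a', i' a' = q a).
    { intros a. apply (proj2 Hi') with (a := ltop). rewrite <- Ht. change (le (j' (dv B t a)) (j' t)). apply hom_mono. exact (proj2_sig a). }
    set (u0 := fun a => proj1_sig (constructive_indefinite_description _ (Hex a))).
    assert (Hu0 : forall a, i' (u0 a) = q a) by (intros a; exact (proj2_sig (constructive_indefinite_description _ (Hex a)))).
    destruct (mono_factor i' (proj1 Hi') q u0 Hu0) as [j Hj].
    assert (Hji : forall a, i' (j a) = j' (dv B t a)) by (intros a; rewrite Hj; apply Hu0).
    assert (py : le y0 t) by apply join2_r.
    set (x0 := exist (fun b => le b t) y0 py : Down B t).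
    assert (Hi : normal_mono (dvh B t)).
    { split.
      - intros x y; apply dv_inj.
      - intros b a Hb. assert (pb : le b t) by (eapply ltrans; [exact Hb| exact (proj2_sig a)]).
        exists (exist _ b pb); reflexivity. }
    assert (HJ : NEc j x0).
    { split.
      - intros a'. destruct (proj1 Hy0 (i' a')) as [b Hb].
        assert (pb : le b t).
        { assert (H1 : le (j' b) (j' t)) by (rewrite Hb, Ht; apply hom_mono, top_greatest).
          apply (proj2 Hy0) in H1. eapply ltrans; [exact H1|]. apply join2_lub; [apply lrefl| exact py]. }
        exists (exist _ b pb). apply (proj1 Hi'). rewrite Hji; exact Hb.
      - intros a b. split.
        + intros H. apply (hom_mono i') in H. rewrite !Hji in H. apply (proj2 Hy0) in H.
          change (le (dvh B t a) (dvh B t (join2 b x0))). rewrite hom_join2. exact H.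
        + intros H. apply (inj_le i' (proj1 Hi')). rewrite !Hji. apply (proj2 Hy0).
          apply (hom_mono (dvh B t)) in H. rewrite hom_join2 in H. exact H. }
    assert (Hc : comp_eq (dvh B t) j' j i') by (intros a; symmetry; apply Hji).
    exists (Down B t), (dvh B t), j. split; [exact Hi|]. split; [exact (c_NE j x0 HJ)|]. split; [exact Hc|].
    split.
    - apply (sq_pb (dvh B t) j j' i' x0 y0 Hi Hi' HJ Hy0 Hc). apply lrefl.
    - apply (sq_po (dvh B t) j j' i' x0 y0 Hi Hi' HJ Hy0 Hc). apply lrefl. }
  {
    intros A B A' i j Hi Hj. destruct (NE_c j Hj) as [x0 Hx0].
    set (y0 := i x0). set (j' := jup B y0).
    assert (Hy0 : NEc j' y0).
    { split.
      - intros b'. exists (uv B y0 b'). apply uv_inj; simpl. apply join2_abs. exact (proj2_sig b').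
      - intros a b. change (le (join2 a y0) (join2 b y0) <-> le a (join2 b y0)). split; intros H.
        + eapply ltrans; [apply join2_l| exact H].
        + apply join2_lub; [exact H| apply join2_r]. }
    set (sel := fun a' => proj1_sig (constructive_indefinite_description _ (proj1 Hx0 a'))).
    assert (Hsel : forall a', j (sel a') = a') by (intros a'; exact (proj2_sig (constructive_indefinite_description _ (proj1 Hx0 a')))).
    assert (H : forall a, j' (i (sel (j a))) = comph i j' a).
    { intros a; apply uv_inj; simpl. unfold y0; rewrite <- !hom_join2; f_equal.
      apply (ne_eq_join j x0 Hx0); apply Hsel. }
    destruct (epi_factor j (proj1 Hx0) (comph i j') (fun a' => j' (i (sel a'))) H) as [i'h Hi'h].
    assert (comm : forall a, i'h (j a) = j' (i a)) by (intros a; rewrite Hi'h; apply H).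
    assert (Hord : forall s1 s2, le (j' (i s1)) (j' (i s2)) <-> le (j s1) (j s2)).
    { intros s1 s2. rewrite (proj2 Hy0), (proj2 Hx0). unfold y0; rewrite <- hom_join2. split.
      - apply (inj_le i (proj1 Hi)).
      - apply hom_mono. }
    assert (Hi' : normal_mono i'h).
    { split.
      - intros x y E. destruct (proj1 Hx0 x) as [s1 <-]; destruct (proj1 Hx0 y) as [s2 <-].
        rewrite !comm in E. apply lanti; apply Hord; rewrite E; apply lrefl.
      - intros b' a' Hb. destruct (proj1 Hx0 a') as [a <-]. rewrite comm in Hb.
        change (le (uv B y0 b') (join2 (i a) (i x0))) in Hb. rewrite <- hom_join2 in Hb.
        destruct (proj2 Hi _ _ Hb) as [a2 Ha2]. exists (j a2). rewrite comm.
        apply uv_inj; simpl; rewrite Ha2. apply join2_abs. exact (proj2_sig b'). }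
    assert (Hc : comp_eq i j' j i'h) by (intros a; symmetry; apply comm).
    exists (Up B y0), i'h, j'. split; [exact Hi'|]. split; [exact (c_NE j' y0 Hy0)|]. split; [exact Hc|].
    split.
    - apply (sq_pb i j j' i'h x0 y0 Hi Hi' Hx0 Hy0 Hc). apply lrefl.
    - apply (sq_po i j j' i'h x0 y0 Hi Hi' Hx0 Hy0 Hc). apply lrefl. }
Qed.
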